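(* Let $l,m$ be positive integers, $n=l+m$, $k=\operatorname{lcm}(l,m)$, let $\alpha_1,\dots,\alpha_l,\beta_1,\dots,\beta_m\ge 0$ be given (in this order), not all zero, with $\alpha_1+\dots+\alpha_l=\beta_1+\dots+\beta_m$, put $\boldsymbol\nu=(\alpha_1,\dots,\alpha_l,-\beta_1,\dots,-\beta_m)$, and let $\boldsymbol\rho=(\rho_1,\dots,\rho_k)$ with every $\rho_i>1$. Then there are unique $k$-tuples of real numbers $(u_0,\dots,u_{k-1})$ and $(v_0,\dots,v_{k-1})$ such that, with the points ${\bf a}_r^t,{\bf b}_r^t$ and segments $\mathcal A_r^t,\mathcal B_r^t$ defined from them as in the context, every segment $\mathcal A_r^t$ ($0\le r<k$, $t\in\mathbb Z$) has slope $\alpha_{r+1}$, every segment $\mathcal B_r^t$ ($0\le r<k$, $t\in\mathbb Z$) has slope $-\beta_{r+1}$, and the set $$\mathcal G(\boldsymbol\nu,\boldsymbol\rho)=\{{\bf 0}\}\cup\bigcup_{t\in\mathbb Z}\bigcup_{0\le r<k}\left(\mathcal A_r^t\cup\mathcal B_r^t\right)\subset\mathbb R^2$$ is a regular $\boldsymbol\nu$-graph.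
   Context: Indexing conventions: for an integer $r$, $\alpha_r:=\alpha_i$ where $1\le i\le l$ and $r\equiv i\pmod l$; $\beta_r:=\beta_j$ where $1\le j\le m$ and $r\equiv j\pmod m$; $\rho_r:=\rho_h$ where $1\le h\le k$ and $r\equiv h\pmod k$. Set $\sigma_0=1$, $\sigma_r=\rho_1\cdots\rho_r$ for $1\le r\le k$, $\tau=\sigma_k=\rho_1\cdots\rho_k$, and for arbitrary $r=sk+h$ with $s\in\mathbb Z$, $0\le h<k$, set $\sigma_r=\tau^s\sigma_h$, $u_r=u_h$, $v_r=v_h$. For $r,t\in\mathbb Z$ define points ${\bf a}_r^t=\tau^t\sigma_r(1,u_r)$ and ${\bf b}_r^t=\tau^t\sigma_r(1,v_r)$ in $\mathbb R^2$, and for $0\le r<k$, $t\in\mathbb Z$ the closed line segments $\mathcal A_r^t=[{\bf a}_r^t,{\bf b}_{r+l}^t]$ and $\mathcal B_r^t=[{\bf b}_r^t,{\bf a}_{r+m}^t]$. A $\boldsymbol\nu$-system is an $n$-tuple of functions $P_1,\dots,P_n:[0,\infty)\to\mathbb R$ which are continuous, satisfy $P_1\le P_2\le\dots\le P_n$ and $P_1(0)=\dots=P_n(0)=0$, are piecewise linear with only finitely many linear pieces in any interval with positive endpoints, have slopes among $\alpha_1,\dots,\alpha_l,-\beta_1,\dots,-\beta_m$, and such that on every interval where each $P_i$ is linear, the slopes of $P_1,\dots,P_n$ are the numbers $\alpha_1,\dots,\alpha_l,-\beta_1,\dots,-\beta_m$ in some order. A $\boldsymbol\nu$-graph is the union of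 the graphs of the functions of a $\boldsymbol\nu$-system. A $\boldsymbol\nu$-system (and its graph) is regular if the graph is invariant under the map $\boldsymbol\eta\mapsto\tau'\boldsymbol\eta$ of $\mathbb R^2$ for some $\tau'>1$. *)

(* Defs.v *)
From Stdlib Require Import Reals ZArith Arith List Permutation.
Open Scope R_scope.

(* For an integer r, the index i in {1,...,p} with r = i (mod p). *)
Definition idx1 (p : nat) (r : Z) : nat :=
  (Z.to_nat ((r - 1) mod Z.of_nat p) + 1)%nat.

Definition idx0 (p : nat) (r : Z) : nat := Z.to_nat (r mod Z.of_nat p).

Fixpoint sigma_nat (rho : nat -> R) (h : nat) : R :=
  match h with
  | O => 1
  | S h' => sigma_nat rho h' * rho (S h')
  end.

Definition tau (rho : nat -> R) (k : nat) : R := sigma_nat rho k.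

Definition sigma (rho : nat -> R) (k : nat) (r : Z) : R :=
  powerRZ (tau rho k) (r / Z.of_nat k) * sigma_nat rho (idx0 k r).

Definition pt (rho : nat -> R) (k : nat) (w : nat -> R) (r t : Z) : R * R :=
  let c := powerRZ (tau rho k) t * sigma rho k r in
  (c, c * w (idx0 k r)).

Definition pa rho k (u : nat -> R) r t := pt rho k u r t.
Definition pb rho k (v : nat -> R) r t := pt rho k v r t.

Definition segment (p q : R * R) (z : R * R) : Prop :=
  exists s, 0 <= s <= 1 /\
    z = (fst p + s * (fst q - fst p), snd p + s * (snd q - snd p)).

Definition slope (p q : R * R) : R := (snd q - snd p) / (fst q - fst p).

Definition segA l k rho u v (r : nat) (t : Z) : (R * R) * (R * R) :=
  (pa rho k u (Z.of_nat r) t, pb rho k v (Z.of_nat (r + l)) t).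
Definition segB m k rho u v (r : nat) (t : Z) : (R * R) * (R * R) :=
  (pb rho k v (Z.of_nat r) t, pa rho k u (Z.of_nat (r + m)) t).

Definition slope_conditions (l m : nat) (alpha beta rho u v : nat -> R) : Prop :=
  let k := Nat.lcm l m in
  forall (r : nat) (t : Z), (r < k)%nat ->
    slope (fst (segA l k rho u v r t)) (snd (segA l k rho u v r t))
      = alpha (idx1 l (Z.of_nat r + 1)) /\
    slope (fst (segB m k rho u v r t)) (snd (segB m k rho u v r t))
      = - beta (idx1 m (Z.of_nat r + 1)).

Definition Gset (l m : nat) (rho u v : nat -> R) (z : R * R) : Prop :=
  let k := Nat.lcm l m in
  z = (0, 0) \/
  exists (t : Z) (r : nat), (r < k)%nat /\
    (segment (fst (segA l k rho u v r t)) (snd (segA l k rho u v r t)) z \/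
     segment (fst (segB m k rho u v r t)) (snd (segB m k rho u v r t)) z).

Definition nu_list (l m : nat) (alpha beta : nat -> R) : list R :=
  map alpha (seq 1 l) ++ map (fun j => - beta j) (seq 1 m).

Definition affine_on (f : R -> R) (s x y : R) : Prop :=
  forall a b, x <= a <= y -> x <= b <= y -> f b - f a = s * (b - a).

(* P_1, ..., P_n (indices 1..n, n = length nu), functions on [0, oo)
   (values outside [0, oo) are irrelevant). *)
Definition nu_system (nu : list R) (P : nat -> R -> R) : Prop :=
  let n := length nu in
  (forall i, (1 <= i <= n)%nat -> forall x, 0 <= x ->
     forall eps, 0 < eps -> exists delta, 0 < delta /\
       forall y, 0 <= y -> Rabs (y - x) < delta -> Rabs (P i y - P i x) < eps) /\
  (forall i, (1 <= i < n)%nat -> forall x, 0 <= x -> P i x <= P (S i) x) /\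
  (forall i, (1 <= i <= n)%nat -> P i 0 = 0) /\
  (forall a b, 0 < a -> a < b ->
     exists xs : list R,
       let pts := a :: xs ++ b :: nil in
       (forall j, (S j < length pts)%nat ->
          nth j pts 0 < nth (S j) pts 0 /\
          forall i, (1 <= i <= n)%nat ->
            exists s, affine_on (P i) s (nth j pts 0) (nth (S j) pts 0))) /\
  (forall i, (1 <= i <= n)%nat -> forall x y s, 0 <= x -> x < y ->
     affine_on (P i) s x y -> In s nu) /\
  (forall x y (s : nat -> R), 0 <= x -> x < y ->
     (forall i, (1 <= i <= n)%nat -> affine_on (P i) (s i) x y) ->
     Permutation (map s (seq 1 n)) nu).

Definition graph_union (n : nat) (P : nat -> R -> R) (z : R * R) : Prop :=
  0 <= fst z /\ exists i, (1 <= i <= n)%nat /\ snd z = P i (fst z).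

Definition nu_graph (nu : list R) (G : R * R -> Prop) : Prop :=
  exists P, nu_system nu P /\ forall z, G z <-> graph_union (length nu) P z.

Definition regular_nu_graph (nu : list R) (G : R * R -> Prop) : Prop :=
  nu_graph nu G /\
  exists tau' : R, 1 < tau' /\
    forall z : R * R, G z <-> G (tau' * fst z, tau' * snd z).

Definition sum_range (f : nat -> R) (p : nat) : R :=
  fold_right Rplus 0 (map f (seq 1 p)).

(* Main.v *)
From Stdlib Require Import Reals ZArith Arith List Permutation Lra Lia Psatz ClassicalEpsilon.
Require Import Defs.


Fixpoint kinsert {A} (f : A -> R) (a : A) (l : list A) : list A :=
  match l with
  | nil => a :: nil
  | b :: l' => if Rle_dec (f a) (f b) then a :: b :: l' else b :: kinsert f a l'
  end.
Fixpoint ksort {A} (f : A -> R) (l : list A) : list A :=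
  match l with nil => nil | a :: l' => kinsert f a (ksort f l') end.

Fixpoint sortedR (l : list R) : Prop :=
  match l with
  | a :: ((b :: _) as l') => a <= b /\ sortedR l'
  | _ => True
  end.

Lemma kinsert_perm {A} (f : A -> R) a l : Permutation (kinsert f a l) (a :: l).
Proof.
  induction l as [|b l IH]; simpl; auto.
  destruct (Rle_dec (f a) (f b)); auto.
  eapply perm_trans. apply perm_skip, IH. apply perm_swap.
Qed.

Lemma ksort_perm {A} (f : A -> R) l : Permutation (ksort f l) l.
Proof.
  induction l as [|a l IH]; simpl; auto.
  eapply perm_trans. apply kinsert_perm. auto.
Qed.

Lemma ins_sorted {A} (f : A -> R) a : forall l x,
  sortedR (x :: map f l) -> x <= f a -> sortedR (x :: map f (kinsert f a l)).
Proof.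
  induction l as [|b l IH]; intros x H1 H2; simpl in *; auto.
  destruct H1 as [H1 H3].
  destruct (Rle_dec (f a) (f b)); simpl; auto.
  split; auto. apply IH; auto. lra.
Qed.

Lemma ksort_sorted {A} (f : A -> R) l : sortedR (map f (ksort f l)).
Proof.
  induction l as [|a l IH]; simpl; auto.
  destruct (ksort f l) as [|b l'] eqn:E; simpl; auto.
  destruct (Rle_dec (f a) (f b)); simpl.
  - split; auto.
  - apply ins_sorted; simpl in IH; auto. lra.
Qed.

Lemma sortedR_tail a l : sortedR (a :: l) -> sortedR l.
Proof. destruct l; simpl; tauto. Qed.

Lemma sortedR_head_min : forall l x, sortedR (x :: l) -> forall y, In y l -> x <= y.
Proof.
  induction l as [|b l IH]; intros x H y Hy; simpl in *. contradiction.
  destruct H as [H1 H2]. destruct Hy as [<-|Hy]. auto.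
  specialize (IH b H2 y Hy). lra.
Qed.

Lemma sorted_perm_eq : forall a b, sortedR a -> sortedR b -> Permutation a b -> a = b.
Proof.
  induction a as [|x a IH]; intros b Ha Hb Hp.
  - apply Permutation_nil in Hp; auto.
  - destruct b as [|y b]. apply Permutation_sym, Permutation_nil in Hp; discriminate.
    assert (Hxy : x = y).
    { destruct (Req_dec x y) as [e|ne]; auto.
      assert (Iy : In y a).
      { assert (In y (x :: a)) by (eapply Permutation_in; [apply Permutation_sym, Hp| left; auto]).
        destruct H; auto. congruence. }
      assert (Ix : In x b).
      { assert (In x (y :: b)) by (eapply Permutation_in; [apply Hp| left; auto]).
        destruct H; auto. congruence. }
      pose proof (sortedR_head_min _ _ Ha _ Iy).
      pose proof (sortedR_head_min _ _ Hb _ Ix). lra. }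
    subst y. f_equal. apply IH.
    eapply sortedR_tail; eauto. eapply sortedR_tail; eauto.
    eapply Permutation_cons_inv; eauto.
Qed.

Definition rsort (l : list R) : list R := ksort (fun x => x) l.

Lemma rsort_perm l : Permutation (rsort l) l.
Proof. apply ksort_perm. Qed.

Lemma rsort_sorted l : sortedR (rsort l).
Proof. pose proof (ksort_sorted (fun x : R => x) l). rewrite map_id in H. exact H. Qed.

Lemma rsort_perm_eq a b : Permutation a b -> rsort a = rsort b.
Proof.
  intro H. apply sorted_perm_eq; try apply rsort_sorted.
  eapply perm_trans. apply rsort_perm. eapply perm_trans. exact H.
  apply Permutation_sym, rsort_perm.
Qed.

Lemma rsort_sorted_eq l : sortedR l -> rsort l = l.
Proof.
  intro H. apply sorted_perm_eq; auto. apply rsort_sorted. apply rsort_perm.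
Qed.

Lemma sortedR_nth : forall l i, sortedR l -> (S i < length l)%nat -> nth i l 0 <= nth (S i) l 0.
Proof.
  induction l as [|a l IH]; intros i H Hi; simpl in *. lia.
  destruct l as [|b l]. simpl in Hi; lia.
  destruct H as [H1 H2]. destruct i. simpl; auto.
  apply (IH i); simpl in *; auto. lia.
Qed.

Lemma sorted_map_mono {A} (f g : A -> R) : forall l,
  sortedR (map f l) ->
  (forall a b, In a l -> In b l -> f a <= f b -> g a <= g b) -> sortedR (map g l).
Proof.
  induction l as [|a l IH]; intros H1 H2; simpl in *; auto.
  destruct l as [|b l]; simpl in *; auto.
  destruct H1 as [H1 H3]. split.
  apply H2; auto.
  apply IH; auto.
Qed.

Section Sig.
Variable rho : nat -> R.
Variable k : nat.
Hypothesis hk : (0 < k)%nat.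
Hypothesis hrho : forall i, (1 <= i <= k)%nat -> 1 < rho i.

Let Sg := sigma rho k.
Let tt := tau rho k.

Lemma kZpos : (0 < Z.of_nat k)%Z. Proof. lia. Qed.
Lemma kZnz : (Z.of_nat k <> 0)%Z. Proof. lia. Qed.

Lemma sigma_nat_ge1 : forall h, (h <= k)%nat -> 1 <= sigma_nat rho h.
Proof.
  induction h; intro H; simpl. lra.
  assert (1 <= sigma_nat rho h) by (apply IHh; lia).
  assert (1 < rho (S h)) by (apply hrho; lia). nra.
Qed.

Lemma sigma_nat_gt1 : forall h, (1 <= h <= k)%nat -> 1 < sigma_nat rho h.
Proof.
  induction h; intro H; simpl. lia.
  assert (1 < rho (S h)) by (apply hrho; lia).
  destruct h. simpl. lra.
  assert (1 < sigma_nat rho (S h)) by (apply IHh; lia). nra.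
Qed.

Lemma tau_gt1 : 1 < tt.
Proof. unfold tt, tau. apply sigma_nat_gt1. lia. Qed.

Lemma idx0_lt r : (idx0 k r < k)%nat.
Proof.
  unfold idx0. pose proof (Z.mod_pos_bound r (Z.of_nat k) kZpos). lia.
Qed.

Lemma idx0_dec r : r = (Z.of_nat (idx0 k r) + (r / Z.of_nat k) * Z.of_nat k)%Z.
Proof.
  unfold idx0. pose proof (Z.mod_pos_bound r (Z.of_nat k) kZpos).
  pose proof (Z.div_mod r (Z.of_nat k) kZnz). rewrite Z2Nat.id; lia.
Qed.

Lemma idx0_shift r t : idx0 k (r + t * Z.of_nat k) = idx0 k r.
Proof. unfold idx0. rewrite Z.mod_add; auto. apply kZnz. Qed.

Lemma S_pos r : 0 < Sg r.
Proof.
  unfold Sg, sigma. apply Rmult_lt_0_compat.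
  apply powerRZ_lt. pose proof tau_gt1. unfold tt in *. lra.
  pose proof (sigma_nat_ge1 (idx0 k r)) as H. pose proof (idx0_lt r). 
  assert (1 <= sigma_nat rho (idx0 k r)) by (apply H; lia). lra.
Qed.

Lemma S_shift r t : Sg (r + t * Z.of_nat k)%Z = powerRZ tt t * Sg r.
Proof.
  unfold Sg, sigma. rewrite idx0_shift. rewrite Z.div_add by apply kZnz.
  rewrite powerRZ_add. fold tt. ring. pose proof tau_gt1. unfold tt in *. lra.
Qed.

Lemma S_nat h : (h < k)%nat -> Sg (Z.of_nat h) = sigma_nat rho h.
Proof.
  intro H. unfold Sg, sigma, idx0.
  rewrite Z.div_small by lia. rewrite Z.mod_small by lia. rewrite Nat2Z.id.
  simpl. ring.
Qed.

Lemma S_succ r : Sg (r + 1)%Z = Sg r * rho (S (idx0 k r)).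
Proof.
  pose proof (idx0_dec r) as E. pose proof (idx0_lt r).
  set (h := idx0 k r) in *. set (q := (r / Z.of_nat k)%Z) in *.
  rewrite E. rewrite S_shift. 
  assert (Hr: (Z.of_nat h + q * Z.of_nat k + 1 = Z.of_nat (S h) + q * Z.of_nat k)%Z) by lia.
  rewrite Hr.
  destruct (Nat.eq_dec (S h) k) as [e|ne].
  - assert (Hr2 : (Z.of_nat (S h) + q * Z.of_nat k = Z.of_nat 0 + (q+1) * Z.of_nat k)%Z) by lia.
    rewrite Hr2, S_shift, S_nat by lia. rewrite S_nat by lia.
    rewrite powerRZ_add. simpl. unfold tt, tau. rewrite <- e. simpl. ring.
    pose proof tau_gt1. unfold tt in *. lra.
  - rewrite S_shift. rewrite !S_nat by lia. simpl. ring.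
Qed.

Lemma S_lt_succ r : Sg r < Sg (r + 1)%Z.
Proof.
  rewrite S_succ. pose proof (S_pos r). pose proof (idx0_lt r).
  assert (1 < rho (S (idx0 k r))) by (apply hrho; lia). nra.
Qed.

Lemma S_lt r1 r2 : (r1 < r2)%Z -> Sg r1 < Sg r2.
Proof.
  intro H. assert (E : r2 = (r1 + Z.of_nat (Z.to_nat (r2 - r1 - 1)) + 1)%Z) by lia.
  rewrite E. generalize (Z.to_nat (r2 - r1 - 1)). intro d. induction d.
  - simpl. rewrite Z.add_0_r. apply S_lt_succ.
  - eapply Rlt_trans. apply IHd. rewrite Nat2Z.inj_succ.
    replace (r1 + Z.succ (Z.of_nat d) + 1)%Z with ((r1 + Z.of_nat d + 1) + 1)%Z by lia.
    apply S_lt_succ.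
Qed.

Lemma S_le r1 r2 : (r1 <= r2)%Z -> Sg r1 <= Sg r2.
Proof.
  intro H. destruct (Z.eq_dec r1 r2). subst; lra. left; apply S_lt; lia.
Qed.

Lemma S_lt_inv r1 r2 : Sg r1 < Sg r2 -> (r1 < r2)%Z.
Proof.
  intro H. destruct (Z_lt_le_dec r1 r2); auto. pose proof (S_le r2 r1 l). lra.
Qed.

Lemma S_le_inv r1 r2 : Sg r1 <= Sg r2 -> (r1 <= r2)%Z.
Proof.
  intro H. destruct (Z_le_gt_dec r1 r2); auto. pose proof (S_lt r2 r1 ltac:(lia)). lra.
Qed.

Lemma S_zero : Sg 0%Z = 1.
Proof. pose proof (S_nat 0 hk) as H. simpl in H. exact H. Qed.

Lemma S_tk t : Sg (t * Z.of_nat k)%Z = powerRZ tt t.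
Proof. rewrite <- (Z.add_0_l (t * _)). rewrite S_shift, S_zero. ring. Qed.

Lemma search_h (x : R) : forall (N : nat) r0, Sg r0 <= x -> x < Sg (r0 + Z.of_nat N)%Z ->
  exists h, Sg h <= x < Sg (h + 1)%Z.
Proof.
  induction N; intros r0 H1 H2.
  - rewrite Z.add_0_r in H2. lra.
  - destruct (Rle_dec (Sg (r0 + 1)%Z) x) as [a|a].
    + apply (IHN (r0 + 1)%Z); auto. replace (r0 + 1 + Z.of_nat N)%Z with (r0 + Z.of_nat (S N))%Z by lia. auto.
    + exists r0. split; auto. lra.
Qed.

Lemma exists_h x : 0 < x -> exists h, Sg h <= x < Sg (h + 1)%Z.
Proof.
  intro Hx. pose proof tau_gt1 as Ht.
  assert (Ha : Rabs tt > 1) by (rewrite Rabs_right; lra).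
  destruct (Pow_x_infinity tt Ha (x + 1)) as [N1 HN1].
  destruct (Pow_x_infinity tt Ha (/ x + 1)) as [N2 HN2].
  specialize (HN1 N1 (le_n _)). specialize (HN2 N2 (le_n _)).
  assert (tt ^ N1 > 0) by (apply pow_lt; lra).
  assert (tt ^ N2 > 0) by (apply pow_lt; lra).
  rewrite Rabs_right in HN1, HN2 by lra.
  set (r0 := (- Z.of_nat N2 * Z.of_nat k)%Z).
  set (r1 := (Z.of_nat N1 * Z.of_nat k)%Z).
  assert (Hr0 : Sg r0 <= x).
  { unfold r0. rewrite S_tk. rewrite powerRZ_neg'. rewrite <- pow_powerRZ.
    assert (/ x < tt ^ N2) by lra.
    apply Rinv_lt_contravar in H1. rewrite Rinv_inv in H1. lra.
    apply Rmult_lt_0_compat. apply Rinv_0_lt_compat; lra. lra. }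
  assert (Hr1 : x < Sg r1).
  { unfold r1. rewrite S_tk. rewrite <- pow_powerRZ. lra. }
  assert (r0 < r1)%Z.
  { apply S_lt_inv. lra. }
  apply (search_h x (Z.to_nat (r1 - r0)) r0); auto.
  rewrite Z2Nat.id by lia. replace (r0 + (r1 - r0))%Z with r1 by lia. auto.
Qed.

Lemma h_unique x h1 h2 : Sg h1 <= x < Sg (h1 + 1)%Z -> Sg h2 <= x < Sg (h2 + 1)%Z -> h1 = h2.
Proof.
  intros [A B] [C D].
  assert (h1 < h2 + 1)%Z by (apply S_lt_inv; lra).
  assert (h2 < h1 + 1)%Z by (apply S_lt_inv; lra). lia.
Qed.

End Sig.

Fixpoint sumN (f : nat -> R) (N : nat) : R :=
  match N with O => 0 | S N' => sumN f N' + f (S N') end.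

Lemma sumN_S f N : sumN f (S N) = sumN f N + f (S N).
Proof. reflexivity. Qed.

Lemma sumN_ext f g N : (forall j, (1 <= j <= N)%nat -> f j = g j) -> sumN f N = sumN g N.
Proof.
  induction N; intro H; simpl; auto. rewrite IHN, H; auto. lia. intros; apply H; lia.
Qed.

Lemma sumN_shift (g : nat -> R) N : sumN (fun j => g (pred j)) N + g N = g 0%nat + sumN g N.
Proof. induction N; simpl. ring. simpl in *. lra. Qed.

Lemma sumN_scal c f N : sumN (fun j => c * f j) N = c * sumN f N.
Proof. induction N; simpl. ring. rewrite IHN. ring. Qed.

Lemma idx1_per p k r t : (0 < p)%nat -> Nat.divide p k ->
  idx1 p (r + t * Z.of_nat k) = idx1 p r.
Proof.
  intros Hp [c Hc]. unfold idx1. subst k. rewrite Nat2Z.inj_mul.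
  replace (r + t * (Z.of_nat c * Z.of_nat p) - 1)%Z with ((r - 1) + (t * Z.of_nat c) * Z.of_nat p)%Z by ring.
  rewrite Z.mod_add by lia. reflexivity.
Qed.

Lemma Rdiv_eq_iff a b c : b <> 0 -> (a / b = c <-> a = c * b).
Proof. intro H. split; intro E. rewrite <- E. field. auto. rewrite E. field. auto. Qed.

Section Lin.
Variables (l m : nat) (alpha beta rho : nat -> R).
Hypothesis hl : (0 < l)%nat.
Hypothesis hm : (0 < m)%nat.

Lemma k_pos : (0 < Nat.lcm l m)%nat.
Proof. pose proof (Nat.lcm_eq_0 l m). destruct (Nat.eq_dec (Nat.lcm l m) 0); [apply H in e; lia | lia]. Qed.
Hypothesis hrho : forall i, (1 <= i <= Nat.lcm l m)%nat -> 1 < rho i.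

Definition Sg := sigma rho (Nat.lcm l m).
Definition tt := tau rho (Nat.lcm l m).
Definition aa (r : Z) := alpha (idx1 l (r + 1)).
Definition bb (r : Z) := beta (idx1 m (r + 1)).
Definition Xw (w : nat -> R) (r : Z) := Sg r * w (idx0 (Nat.lcm l m) r).
Definition lZ := Z.of_nat l.
Definition mZ := Z.of_nat m.
Definition kZ := Z.of_nat (Nat.lcm l m).

Definition EqA (X Y : Z -> R) := forall r, Y (r + lZ)%Z - X r = aa r * (Sg (r + lZ)%Z - Sg r).
Definition EqB (X Y : Z -> R) := forall r, X (r + mZ)%Z - Y r = - bb r * (Sg (r + mZ)%Z - Sg r).

Lemma tt_gt1 : 1 < tt.
Proof. apply tau_gt1. apply k_pos. exact hrho. Qed.
Lemma Sg_pos r : 0 < Sg r.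
Proof. apply S_pos. apply k_pos. exact hrho. Qed.
Lemma Sg_shift r t : Sg (r + t * kZ)%Z = powerRZ tt t * Sg r.
Proof. apply S_shift. apply k_pos. exact hrho. Qed.
Lemma Sg_lt r1 r2 : (r1 < r2)%Z -> Sg r1 < Sg r2.
Proof. apply S_lt. apply k_pos. exact hrho. Qed.
Lemma Sg_le r1 r2 : (r1 <= r2)%Z -> Sg r1 <= Sg r2.
Proof. apply S_le. apply k_pos. exact hrho. Qed.
Lemma Sg_lt_inv r1 r2 : Sg r1 < Sg r2 -> (r1 < r2)%Z.
Proof. apply S_lt_inv. apply k_pos. exact hrho. Qed.
Lemma Sg_le_inv r1 r2 : Sg r1 <= Sg r2 -> (r1 <= r2)%Z.
Proof. apply S_le_inv. apply k_pos. exact hrho. Qed.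

Lemma aa_per r t : aa (r + t * kZ)%Z = aa r.
Proof.
  unfold aa. replace (r + t * kZ + 1)%Z with ((r + 1) + t * kZ)%Z by ring.
  unfold kZ. rewrite idx1_per; auto. apply Nat.divide_lcm_l.
Qed.
Lemma bb_per r t : bb (r + t * kZ)%Z = bb r.
Proof.
  unfold bb. replace (r + t * kZ + 1)%Z with ((r + 1) + t * kZ)%Z by ring.
  unfold kZ. rewrite idx1_per; auto. apply Nat.divide_lcm_r.
Qed.

Lemma Xw_shift w r t : Xw w (r + t * kZ)%Z = powerRZ tt t * Xw w r.
Proof.
  unfold Xw. rewrite Sg_shift. unfold kZ. rewrite idx0_shift. ring. apply k_pos.
Qed.

Lemma pt_eq w r t : pt rho (Nat.lcm l m) w r t = (Sg (r + t * kZ)%Z, Xw w (r + t * kZ)%Z).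
Proof.
  unfold pt, Xw. rewrite Sg_shift. unfold kZ. rewrite idx0_shift by apply k_pos.
  unfold Sg. fold tt. reflexivity.
Qed.

Lemma slope_equiv u v :
  slope_conditions l m alpha beta rho u v <-> (EqA (Xw u) (Xw v) /\ EqB (Xw u) (Xw v)).
Proof.
  unfold slope_conditions, EqA, EqB, segA, segB, pa, pb, slope. cbv zeta.
  split.
  - intro H. split; intro r.
    + pose proof (idx0_dec _ k_pos r) as E. pose proof (idx0_lt _ k_pos r) as L.
      destruct (H _ (r / Z.of_nat (Nat.lcm l m))%Z L) as [H1 _].
      rewrite !pt_eq in H1. simpl in H1. fold kZ in E, H1. rewrite <- E in H1.
      rewrite Nat2Z.inj_add in H1. fold lZ in H1.
      replace (Z.of_nat (idx0 (Nat.lcm l m) r) + lZ + r / kZ * kZ)%Z with (r + lZ)%Z in H1 by (fold kZ in *; lia).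
      assert (Ea : alpha (idx1 l (Z.of_nat (idx0 (Nat.lcm l m) r) + 1)) = aa r).
      { rewrite E at 2. rewrite aa_per. reflexivity. }
      rewrite Ea in H1. apply Rdiv_eq_iff in H1. rewrite H1. ring.
      unfold lZ. assert (Sg r < Sg (r + Z.of_nat l)%Z) by (apply Sg_lt; lia). lra.
    + pose proof (idx0_dec _ k_pos r) as E. pose proof (idx0_lt _ k_pos r) as L.
      destruct (H _ (r / Z.of_nat (Nat.lcm l m))%Z L) as [_ H1].
      rewrite !pt_eq in H1. simpl in H1. fold kZ in E, H1. rewrite <- E in H1.
      rewrite Nat2Z.inj_add in H1. fold mZ in H1.
      replace (Z.of_nat (idx0 (Nat.lcm l m) r) + mZ + r / kZ * kZ)%Z with (r + mZ)%Z in H1 by (fold kZ in *; lia).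
      assert (Ea : beta (idx1 m (Z.of_nat (idx0 (Nat.lcm l m) r) + 1)) = bb r).
      { rewrite E at 2. rewrite bb_per. reflexivity. }
      rewrite Ea in H1. apply Rdiv_eq_iff in H1. rewrite H1. ring.
      unfold mZ. assert (Sg r < Sg (r + Z.of_nat m)%Z) by (apply Sg_lt; lia). lra.
  - intros [HA HB] r t Hr. rewrite !pt_eq. simpl. rewrite !Nat2Z.inj_add.
    set (r' := (Z.of_nat r + t * kZ)%Z).
    replace (Z.of_nat r + Z.of_nat l + t * kZ)%Z with (r' + lZ)%Z by (unfold r', lZ; ring).
    replace (Z.of_nat r + Z.of_nat m + t * kZ)%Z with (r' + mZ)%Z by (unfold r', mZ; ring).
    assert (Sg r' < Sg (r' + lZ)%Z) by (apply Sg_lt; unfold lZ; lia).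
    assert (Sg r' < Sg (r' + mZ)%Z) by (apply Sg_lt; unfold mZ; lia).
    split; apply Rdiv_eq_iff; try lra.
    + rewrite HA. unfold r'. rewrite aa_per. reflexivity.
    + rewrite HB. unfold r'. rewrite bb_per. reflexivity.
Qed.

Definition nZ := (lZ + mZ)%Z.
Definition Cc (r : Z) := aa r * (Sg (r + lZ)%Z - Sg r) - bb (r + lZ)%Z * (Sg (r + nZ)%Z - Sg (r + lZ)%Z).

Lemma Cc_shift r t : Cc (r + t * kZ)%Z = powerRZ tt t * Cc r.
Proof.
  unfold Cc. rewrite aa_per.
  replace (r + t * kZ + lZ)%Z with ((r + lZ) + t * kZ)%Z by ring.
  replace (r + t * kZ + nZ)%Z with ((r + nZ) + t * kZ)%Z by ring.
  rewrite bb_per, !Sg_shift. ring.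
Qed.

Lemma X_step X Y : EqA X Y -> EqB X Y -> forall r, X (r + nZ)%Z = X r + Cc r.
Proof.
  intros HA HB r. specialize (HA r). specialize (HB (r + lZ)%Z).
  unfold Cc. replace (r + lZ + mZ)%Z with (r + nZ)%Z in HB by (unfold nZ; ring). lra.
Qed.

Definition Tsum (r : Z) := sumN (fun j => Cc (r - Z.of_nat j * nZ)%Z) (Nat.lcm l m).
Definition Dd := 1 - powerRZ tt (- nZ).

Lemma Dd_pos : 0 < Dd.
Proof.
  unfold Dd. rewrite powerRZ_neg'. pose proof tt_gt1 as Ht.
  assert (En : nZ = Z.of_nat (l + m)) by (unfold nZ, lZ, mZ; lia). rewrite En, <- pow_powerRZ.
  assert (H1 : 1 < tt ^ (l + m)).
  { apply Rlt_le_trans with (tt ^ 1). simpl; lra. apply Rle_pow; [lra|lia]. }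
  assert (H2 : / tt ^ (l + m) < 1).
  { apply Rinv_lt_contravar in H1. rewrite Rinv_1 in H1. lra. lra. }
  lra.
Qed.

Lemma X_tele X (HS : forall r t, X (r + t * kZ)%Z = powerRZ tt t * X r) :
  (forall r, X (r + nZ)%Z = X r + Cc r) -> forall r, X r = Tsum r / Dd.
Proof.
  intros Hs r.
  assert (Ht : forall N, X r - X (r - Z.of_nat N * nZ)%Z = sumN (fun j => Cc (r - Z.of_nat j * nZ)%Z) N).
  { induction N. simpl sumN. replace (r - Z.of_nat 0 * nZ)%Z with r by lia. ring.
    rewrite sumN_S. rewrite <- IHN.
    pose proof (Hs (r - Z.of_nat (S N) * nZ)%Z).
    replace (r - Z.of_nat (S N) * nZ + nZ)%Z with (r - Z.of_nat N * nZ)%Z in H by (rewrite Nat2Z.inj_succ; unfold Z.succ; ring). lra. }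
  specialize (Ht (Nat.lcm l m)). unfold Tsum. rewrite <- Ht.
  replace (r - Z.of_nat (Nat.lcm l m) * nZ)%Z with (r + (- nZ) * kZ)%Z by (unfold kZ; ring).
  rewrite HS. pose proof Dd_pos. unfold Dd in *. field. lra.
Qed.

Lemma Tsum_shift r t : Tsum (r + t * kZ)%Z = powerRZ tt t * Tsum r.
Proof.
  unfold Tsum. rewrite <- sumN_scal. apply sumN_ext. intros j _.
  replace (r + t * kZ - Z.of_nat j * nZ)%Z with ((r - Z.of_nat j * nZ) + t * kZ)%Z by ring.
  apply Cc_shift.
Qed.

Definition Xd r := Tsum r / Dd.
Definition Yd r := Xd (r - lZ)%Z + aa (r - lZ)%Z * (Sg r - Sg (r - lZ)%Z).

Lemma Xd_shift r t : Xd (r + t * kZ)%Z = powerRZ tt t * Xd r.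
Proof. unfold Xd. rewrite Tsum_shift. unfold Rdiv. ring. Qed.

Lemma Yd_shift r t : Yd (r + t * kZ)%Z = powerRZ tt t * Yd r.
Proof.
  unfold Yd. replace (r + t * kZ - lZ)%Z with ((r - lZ) + t * kZ)%Z by ring.
  rewrite Xd_shift, aa_per, !Sg_shift. ring.
Qed.

Lemma Xd_step r : Xd (r + nZ)%Z = Xd r + Cc r.
Proof.
  unfold Xd, Tsum. pose proof Dd_pos as HD.
  assert (H1 : sumN (fun j => Cc (r + nZ - Z.of_nat j * nZ)%Z) (Nat.lcm l m)
            = sumN (fun j => (fun i => Cc (r - Z.of_nat i * nZ)%Z) (pred j)) (Nat.lcm l m)).
  { apply sumN_ext. intros j Hj. f_equal. destruct j. lia. simpl pred. lia. }
  rewrite H1.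
  pose proof (sumN_shift (fun i => Cc (r - Z.of_nat i * nZ)%Z) (Nat.lcm l m)) as H2.
  simpl in H2. replace (r - 0 * nZ)%Z with r in H2 by ring.
  replace (r - Z.of_nat (Nat.lcm l m) * nZ)%Z with (r + (- nZ) * kZ)%Z in H2 by (unfold kZ; ring).
  rewrite Cc_shift in H2. unfold Dd in *.
  apply (Rmult_eq_reg_l (1 - powerRZ tt (- nZ))); [|lra].
  field_simplify; try lra. rewrite Z.sub_0_r in H2. lra.
Qed.

Lemma Xd_ok : EqA Xd Yd /\ EqB Xd Yd.
Proof.
  split; intro r.
  - unfold Yd. replace (r + lZ - lZ)%Z with r by ring. ring.
  - unfold Yd. pose proof (Xd_step (r - lZ)%Z) as H.
    replace (r - lZ + nZ)%Z with (r + mZ)%Z in H by (unfold nZ; ring).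
    rewrite H. unfold Cc. replace (r - lZ + lZ)%Z with r by ring.
    replace (r - lZ + nZ)%Z with (r + mZ)%Z by (unfold nZ; ring). ring.
Qed.

Lemma Xw_of F (HF : forall r t, F (r + t * kZ)%Z = powerRZ tt t * F r) r :
  Xw (fun h => F (Z.of_nat h) / Sg (Z.of_nat h)) r = F r.
Proof.
  unfold Xw. pose proof (idx0_dec _ k_pos r) as E. fold kZ in E.
  set (h := idx0 (Nat.lcm l m) r) in *. set (q := (r / kZ)%Z) in *.
  rewrite E, Sg_shift, HF. pose proof (Sg_pos (Z.of_nat h)). field. lra.
Qed.

Definition u0 h := Xd (Z.of_nat h) / Sg (Z.of_nat h).
Definition v0 h := Yd (Z.of_nat h) / Sg (Z.of_nat h).

Lemma Xw_u0 r : Xw u0 r = Xd r.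
Proof. apply Xw_of. apply Xd_shift. Qed.
Lemma Xw_v0 r : Xw v0 r = Yd r.
Proof. apply Xw_of. apply Yd_shift. Qed.

Lemma slope_u0v0 : slope_conditions l m alpha beta rho u0 v0.
Proof.
  apply slope_equiv. destruct Xd_ok as [A B]. split; intro r.
  rewrite !Xw_u0, !Xw_v0. apply A. rewrite !Xw_u0, !Xw_v0. apply B.
Qed.

Lemma unique_uv u v : slope_conditions l m alpha beta rho u v ->
  forall h, (h < Nat.lcm l m)%nat -> u h = u0 h /\ v h = v0 h.
Proof.
  intros Hs h Hh. apply slope_equiv in Hs. destruct Hs as [A B].
  assert (HX : forall r, Xw u r = Xd r).
  { intro r. apply X_tele. apply Xw_shift. apply X_step with (Xw v); auto. }
  assert (Hi : idx0 (Nat.lcm l m) (Z.of_nat h) = h).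
  { unfold idx0. rewrite Z.mod_small by lia. apply Nat2Z.id. }
  pose proof (Sg_pos (Z.of_nat h)).
  split.
  - unfold u0. rewrite <- HX. unfold Xw. rewrite Hi. field. lra.
  - unfold v0. assert (HY : Xw v (Z.of_nat h) = Yd (Z.of_nat h)).
    { specialize (A (Z.of_nat h - lZ)%Z). replace (Z.of_nat h - lZ + lZ)%Z with (Z.of_nat h) in A by ring.
      unfold Yd. rewrite <- HX. lra. }
    rewrite <- HY. unfold Xw. rewrite Hi. field. lra.
Qed.

End Lin.

Definition eval (L : R * R) (z : R) : R := snd L + fst L * z.

Definition crossings (Ls : list (R * R)) : list R :=
  flat_map (fun L1 => map (fun L2 => (snd L2 - snd L1) / (fst L1 - fst L2)) Ls) Ls.

Lemma in_crossings Ls L1 L2 : In L1 Ls -> In L2 Ls ->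
  In ((snd L2 - snd L1) / (fst L1 - fst L2)) (crossings Ls).
Proof.
  intros H1 H2. unfold crossings. apply in_flat_map. exists L1. split; auto.
  apply in_map_iff. exists L2. auto.
Qed.

Lemma pair_mono s1 b1 s2 b2 x y z :
  x < y -> x <= z <= y ->
  b1 + s1 * ((x + y) / 2) <= b2 + s2 * ((x + y) / 2) ->
  ~ (x < (b2 - b1) / (s1 - s2) < y) ->
  b1 + s1 * z <= b2 + s2 * z.
Proof.
  intros Hxy Hz Hc Hw.
  destruct (Req_dec s1 s2) as [e|ne].
  - subst s2. lra.
  - set (w := (b2 - b1) / (s1 - s2)) in *.
    assert (HD : forall t, (b2 + s2 * t) - (b1 + s1 * t) = (s2 - s1) * (t - w)).
    { intro t. unfold w. field. lra. }
    set (c := (x + y) / 2) in *.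
    assert (Hc' : 0 <= (s2 - s1) * (c - w)) by (rewrite <- HD; lra).
    destruct (Rle_dec (b1 + s1 * z) (b2 + s2 * z)) as [ok|bad]; auto.
    exfalso. assert (Hz' : (s2 - s1) * (z - w) < 0) by (rewrite <- HD; lra).
    apply Hw. unfold c in *.
    destruct (Rlt_dec 0 (s2 - s1)) as [p|np].
    + assert (z - w < 0) by (apply (Rmult_lt_reg_l (s2 - s1)); lra).
      assert (0 <= c - w). { destruct (Rle_dec 0 (c - w)); auto. exfalso. nra. }
      unfold c in *. lra.
    + assert (s2 - s1 < 0) by lra.
      assert (0 < z - w) by nra.
      assert (c - w <= 0) by nra.
      unfold c in *. lra.
Qed.

Lemma K2 Ls x y : x < y -> (forall w, In w (crossings Ls) -> ~ (x < w < y)) ->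
  exists Ls', Permutation Ls' Ls /\
    forall z, x <= z <= y -> rsort (map (fun L => eval L z) Ls) = map (fun L => eval L z) Ls'.
Proof.
  intros Hxy Hw. exists (ksort (fun L => eval L ((x + y) / 2)) Ls). split.
  apply ksort_perm. intros z Hz.
  transitivity (rsort (map (fun L => eval L z) (ksort (fun L => eval L ((x + y) / 2)) Ls))).
  - apply rsort_perm_eq. apply Permutation_map. apply Permutation_sym, ksort_perm.
  - apply rsort_sorted_eq. apply sorted_map_mono with (f := fun L => eval L ((x + y) / 2)).
    apply ksort_sorted.
    intros a b Ha Hb Hab. 
    assert (Ha' : In a Ls) by (eapply Permutation_in; [apply ksort_perm|exact Ha]).
    assert (Hb' : In b Ls) by (eapply Permutation_in; [apply ksort_perm|exact Hb]).
    unfold eval in *. apply (pair_mono (fst a) (snd a) (fst b) (snd b) x y z); auto.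
    apply Hw. apply in_crossings; auto.
Qed.

Lemma filter_le {A} (f g : A -> bool) : forall l,
  (forall x, In x l -> f x = true -> g x = true) ->
  (length (filter f l) <= length (filter g l))%nat.
Proof.
  induction l as [|a l IH]; intros H1; simpl; auto.
  assert (IH' := IH (fun x Hx => H1 x (or_intror Hx))).
  destruct (f a) eqn:E.
  - rewrite (H1 a (or_introl eq_refl) E). simpl. lia.
  - destruct (g a); simpl; lia.
Qed.

Lemma filter_lt {A} (f g : A -> bool) w : forall l,
  (forall x, In x l -> f x = true -> g x = true) -> In w l -> g w = true -> f w = false ->
  (length (filter f l) < length (filter g l))%nat.
Proof.
  induction l as [|a l IH]; intros H1 H2 H3 H4. simpl in H2; destruct H2.
  simpl. destruct H2 as [<-|H2].
  - rewrite H3, H4. simpl.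
    assert (length (filter f l) <= length (filter g l))%nat.
    { apply filter_le. intros; apply H1; simpl; auto. }
    lia.
  - assert (IH' := IH (fun x Hx => H1 x (or_intror Hx)) H2 H3 H4).
    destruct (f a) eqn:E.
    + rewrite (H1 a (or_introl eq_refl) E). simpl. lia.
    + destruct (g a); simpl; lia.
Qed.

Lemma map_nth_seq1 {A B} (g : A -> B) d : forall L,
  map (fun i => g (nth (pred i) L d)) (seq 1 (length L)) = map g L.
Proof.
  induction L as [|a L IH]; simpl; auto. f_equal.
  rewrite <- seq_shift, map_map. rewrite <- IH.
  apply map_ext_in. intros i Hi. apply in_seq in Hi. destruct i. lia. reflexivity.
Qed.

Lemma idx1_range p z : (0 < p)%nat -> (1 <= idx1 p z <= p)%nat.
Proof.
  intro H. unfold idx1. pose proof (Z.mod_pos_bound (z - 1) (Z.of_nat p) ltac:(lia)). lia.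
Qed.

Lemma idx1_perm p h : (0 < p)%nat ->
  Permutation (map (fun j => idx1 p (h - Z.of_nat j + 1)) (seq 0 p)) (seq 1 p).
Proof.
  intro Hp. apply NoDup_Permutation_bis.
  - apply FinFun.Injective_map_NoDup_in. 2: apply seq_NoDup.
    intros i j Hi Hj E. apply in_seq in Hi, Hj. unfold idx1 in E.
    replace (h - Z.of_nat i + 1 - 1)%Z with (h - Z.of_nat i)%Z in E by ring.
    replace (h - Z.of_nat j + 1 - 1)%Z with (h - Z.of_nat j)%Z in E by ring.
    assert (P0 : (0 < Z.of_nat p)%Z) by lia.
    pose proof (Z.mod_pos_bound (h - Z.of_nat i) _ P0).
    pose proof (Z.mod_pos_bound (h - Z.of_nat j) _ P0).
    assert (E2 : ((h - Z.of_nat i) mod Z.of_nat p = (h - Z.of_nat j) mod Z.of_nat p)%Z) by lia.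
    pose proof (Z.div_mod (h - Z.of_nat i) (Z.of_nat p) ltac:(lia)).
    pose proof (Z.div_mod (h - Z.of_nat j) (Z.of_nat p) ltac:(lia)).
    set (q1 := ((h - Z.of_nat i) / Z.of_nat p)%Z) in *.
    set (q2 := ((h - Z.of_nat j) / Z.of_nat p)%Z) in *.
    assert (Hd : (Z.of_nat j - Z.of_nat i = Z.of_nat p * (q1 - q2))%Z) by lia.
    assert (q1 - q2 = 0)%Z by nia. lia.
  - rewrite length_map, !length_seq. lia.
  - intros a Ha. apply in_map_iff in Ha. destruct Ha as [j [<- _]].
    apply in_seq. pose proof (idx1_range p (h - Z.of_nat j + 1) Hp). lia.
Qed.

Lemma map_seq_first {T} (f : Z -> T) h L :
  map (fun j => f (h - Z.of_nat j)%Z) (seq 0 (S L)) = f h :: map (fun j => f ((h - 1) - Z.of_nat j)%Z) (seq 0 L).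
Proof.
  simpl. rewrite Z.sub_0_r. f_equal. rewrite <- seq_shift, map_map.
  apply map_ext. intro j. f_equal. lia.
Qed.

Lemma map_seq_last {T} (f : Z -> T) h L :
  map (fun j => f (h - Z.of_nat j)%Z) (seq 0 (S L)) =
  map (fun j => f (h - Z.of_nat j)%Z) (seq 0 L) ++ f (h - Z.of_nat L)%Z :: nil.
Proof. rewrite seq_S, map_app. reflexivity. Qed.

Section Graph.
Variables (l m : nat) (alpha beta rho u v : nat -> R).
Hypothesis hl : (0 < l)%nat.
Hypothesis hm : (0 < m)%nat.
Hypothesis hrho : forall i, (1 <= i <= Nat.lcm l m)%nat -> 1 < rho i.
Hypothesis HA : EqA l m alpha rho (Xw l m rho u) (Xw l m rho v).
Hypothesis HB : EqB l m beta rho (Xw l m rho u) (Xw l m rho v).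

Notation Sg := (Sg l m rho).
Notation aa := (aa l alpha).
Notation bb := (bb m beta).
Notation X := (Xw l m rho u).
Notation Y := (Xw l m rho v).

Lemma Sp r : 0 < Sg r.
Proof. exact (Sg_pos l m rho hl hm hrho r). Qed.
Lemma Slt r1 r2 : (r1 < r2)%Z -> Sg r1 < Sg r2.
Proof. exact (Sg_lt l m rho hl hm hrho r1 r2). Qed.
Lemma Sle r1 r2 : (r1 <= r2)%Z -> Sg r1 <= Sg r2.
Proof. exact (Sg_le l m rho hl hm hrho r1 r2). Qed.
Lemma Sltinv r1 r2 : Sg r1 < Sg r2 -> (r1 < r2)%Z.
Proof. exact (Sg_lt_inv l m rho hl hm hrho r1 r2). Qed.
Lemma Sleinv r1 r2 : Sg r1 <= Sg r2 -> (r1 <= r2)%Z.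
Proof. exact (Sg_le_inv l m rho hl hm hrho r1 r2). Qed.
Lemma Sshift r t : Sg (r + t * kZ l m)%Z = powerRZ (tt l m rho) t * Sg r.
Proof. exact (Sg_shift l m rho hl hm hrho r t). Qed.

Definition lineA (r : Z) : R * R := (aa r, X r - aa r * Sg r).
Definition lineB (r : Z) : R * R := (- bb r, Y r + bb r * Sg r).

Definition W (h : Z) : list (R * R) :=
  map (fun j => lineA (h - Z.of_nat j)%Z) (seq 0 l) ++ map (fun j => lineB (h - Z.of_nat j)%Z) (seq 0 m).

Definition Gsegs (x y : R) : Prop :=
  exists r, (Sg r <= x <= Sg (r + lZ l)%Z /\ y = eval (lineA r) x) \/
            (Sg r <= x <= Sg (r + mZ m)%Z /\ y = eval (lineB r) x).

Lemma W_len h : length (W h) = (l + m)%nat.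
Proof. unfold W. rewrite length_app, !length_map, !length_seq. reflexivity. Qed.

Lemma evalA_start r : eval (lineA r) (Sg r) = X r.
Proof. unfold eval, lineA. simpl. ring. Qed.
Lemma evalB_start r : eval (lineB r) (Sg r) = Y r.
Proof. unfold eval, lineB. simpl. ring. Qed.
Lemma evalA_end r : eval (lineA r) (Sg (r + lZ l)%Z) = Y (r + lZ l)%Z.
Proof. unfold eval, lineA. simpl. replace (Y (r + lZ l)%Z) with ((Y (r + lZ l)%Z - X r) + X r) by ring. rewrite (HA r). ring. Qed.
Lemma evalB_end r : eval (lineB r) (Sg (r + mZ m)%Z) = X (r + mZ m)%Z.
Proof. unfold eval, lineB. simpl. replace (X (r + mZ m)%Z) with ((X (r + mZ m)%Z - Y r) + Y r) by ring. rewrite (HB r). ring. Qed.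

Lemma W_boundary h :
  Permutation (map (fun L => eval L (Sg h)) (W h)) (map (fun L => eval L (Sg h)) (W (h - 1)%Z)).
Proof.
  unfold W.
  replace (seq 0 l) with (seq 0 (S (pred l))) by (f_equal; lia).
  replace (seq 0 m) with (seq 0 (S (pred m))) by (f_equal; lia).
  rewrite (map_seq_first lineA), (map_seq_first lineB).
  rewrite (map_seq_last lineA (h - 1)), (map_seq_last lineB (h - 1)).
  rewrite !map_app. simpl map.
  rewrite evalA_start, evalB_start.
  replace (h - 1 - Z.of_nat (pred l))%Z with (h - lZ l)%Z by (unfold lZ; lia).
  replace (h - 1 - Z.of_nat (pred m))%Z with (h - mZ m)%Z by (unfold mZ; lia).
  pose proof (evalA_end (h - lZ l)%Z) as E1. pose proof (evalB_end (h - mZ m)%Z) as E2.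
  replace (h - lZ l + lZ l)%Z with h in E1 by ring.
  replace (h - mZ m + mZ m)%Z with h in E2 by ring.
  rewrite E1, E2.
  eapply perm_trans. apply Permutation_cons_append.
  rewrite <- !app_assoc. simpl. apply Permutation_refl.
Qed.

Definition hof (x : R) : Z := epsilon (inhabits 0%Z) (fun h => Sg h <= x < Sg (h + 1)%Z).

Lemma exists_h' x : 0 < x -> exists h, Sg h <= x < Sg (h + 1)%Z.
Proof. apply exists_h. apply k_pos; auto. exact hrho. Qed.

Lemma hof_spec x : 0 < x -> Sg (hof x) <= x < Sg (hof x + 1)%Z.
Proof. intro H. unfold hof. apply epsilon_spec. apply exists_h'; auto. Qed.

Lemma hof_eq x h : Sg h <= x < Sg (h + 1)%Z -> hof x = h.
Proof.
  intro H. assert (0 < x) by (pose proof (Sp h); lra).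
  apply (h_unique rho (Nat.lcm l m) (k_pos l m hl hm) hrho x); auto. apply hof_spec; auto.
Qed.

Definition P (i : nat) (x : R) : R :=
  if Rle_dec x 0 then 0 else nth (pred i) (rsort (map (fun L => eval L x) (W (hof x)))) 0.

Lemma K1 h x i : Sg h <= x <= Sg (h + 1)%Z ->
  P i x = nth (pred i) (rsort (map (fun L => eval L x) (W h))) 0.
Proof.
  intro H. pose proof (Sp h). unfold P.
  destruct (Rle_dec x 0). lra.
  destruct (Req_dec x (Sg (h + 1)%Z)) as [e|ne].
  - rewrite (hof_eq x (h + 1)%Z).
    + subst x. rewrite (rsort_perm_eq _ _ (W_boundary (h + 1)%Z)).
      replace (h + 1 - 1)%Z with h by ring. reflexivity.
    + split. lra. rewrite e. apply Slt. lia.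
  - rewrite (hof_eq x h); auto. lra.
Qed.

Lemma inW_A h j : (j < l)%nat -> In (lineA (h - Z.of_nat j)%Z) (W h).
Proof. intro H. unfold W. apply in_or_app. left. apply in_map_iff. exists j. split; [reflexivity| apply in_seq; lia]. Qed.
Lemma inW_B h j : (j < m)%nat -> In (lineB (h - Z.of_nat j)%Z) (W h).
Proof. intro H. unfold W. apply in_or_app. right. apply in_map_iff. exists j. split; [reflexivity| apply in_seq; lia]. Qed.

Lemma vals_Gsegs x y h : Sg h <= x < Sg (h + 1)%Z ->
  (In y (map (fun L => eval L x) (W h)) <-> Gsegs x y).
Proof.
  intros Hx. split.
  - intro Hy. apply in_map_iff in Hy. destruct Hy as [L [<- HL]].
    unfold W in HL. apply in_app_or in HL. destruct HL as [HL|HL];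
      apply in_map_iff in HL; destruct HL as [j [<- Hj]]; apply in_seq in Hj;
      exists (h - Z.of_nat j)%Z.
    + left. split; auto. split.
      * apply Rle_trans with (Sg h); [apply Sle; lia | lra].
      * left. apply Rlt_le_trans with (Sg (h + 1)%Z). lra. apply Sle. unfold lZ. lia.
    + right. split; auto. split.
      * apply Rle_trans with (Sg h); [apply Sle; lia | lra].
      * left. apply Rlt_le_trans with (Sg (h + 1)%Z). lra. apply Sle. unfold mZ. lia.
  - intros [r [[Hr Hy]|[Hr Hy]]]; apply in_map_iff.
    + assert (r < h + 1)%Z by (apply Sltinv; lra).
      destruct (Req_dec x (Sg (r + lZ l)%Z)) as [e|ne].
      * assert (h <= r + lZ l)%Z by (apply Sleinv; lra).
        assert (r + lZ l < h + 1)%Z by (apply Sltinv; lra).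
        exists (lineB (h - Z.of_nat 0)%Z). split. 2: apply inW_B; lia.
        rewrite Z.sub_0_r. replace h with (r + lZ l)%Z by lia. rewrite Hy, e.
        rewrite evalA_end, evalB_start. reflexivity.
      * assert (h < r + lZ l)%Z by (apply Sltinv; lra).
        exists (lineA (h - Z.of_nat (Z.to_nat (h - r)))%Z). split.
        rewrite Z2Nat.id by lia. replace (h - (h - r))%Z with r by ring. auto.
        apply inW_A. unfold lZ in *. lia.
    + assert (r < h + 1)%Z by (apply Sltinv; lra).
      destruct (Req_dec x (Sg (r + mZ m)%Z)) as [e|ne].
      * assert (h <= r + mZ m)%Z by (apply Sleinv; lra).
        assert (r + mZ m < h + 1)%Z by (apply Sltinv; lra).
        exists (lineA (h - Z.of_nat 0)%Z). split. 2: apply inW_A; lia.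
        rewrite Z.sub_0_r. replace h with (r + mZ m)%Z by lia. rewrite Hy, e.
        rewrite evalB_end, evalA_start. reflexivity.
      * assert (h < r + mZ m)%Z by (apply Sltinv; lra).
        exists (lineB (h - Z.of_nat (Z.to_nat (h - r)))%Z). split.
        rewrite Z2Nat.id by lia. replace (h - (h - r))%Z with r by ring. auto.
        apply inW_B. unfold mZ in *. lia.
Qed.

Lemma seg_iff (p q z : R * R) a : fst p < fst q -> snd q - snd p = a * (fst q - fst p) ->
  (segment p q z <-> fst p <= fst z <= fst q /\ snd z = snd p + a * (fst z - fst p)).
Proof.
  intros H1 H2. destruct p as [p1 p2], q as [q1 q2], z as [z1 z2]. simpl in *. unfold segment. simpl.
  split.
  - intros [s [Hs E]]. injection E as E1 E2. subst. split. nra.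
    rewrite H2. ring.
  - intros [Hz E]. exists ((z1 - p1) / (q1 - p1)). split.
    + split. unfold Rdiv; apply Rmult_le_pos; [lra| left; apply Rinv_0_lt_compat; lra].
      apply Rmult_le_reg_r with (q1 - p1). lra. unfold Rdiv. rewrite Rmult_assoc, Rinv_l by lra. lra.
    + f_equal. field. lra. rewrite E, H2. field. lra.
Qed.

Lemma Gsegs_pos x y : Gsegs x y -> 0 < x.
Proof. intros [r [[H _]|[H _]]]; pose proof (Sp r); lra. Qed.

Lemma Gset_iff x y : Gset l m rho u v (x, y) <-> (x, y) = (0, 0) \/ Gsegs x y.
Proof.
  unfold Gset, segA, segB, pa, pb. cbv zeta.
  setoid_rewrite (pt_eq l m rho hl hm hrho). simpl fst; simpl snd.
  split.
  - intros [H|[t [r [Hr [H|H]]]]]; auto; right;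
      set (r' := (Z.of_nat r + t * kZ l m)%Z);
      rewrite Nat2Z.inj_add in H.
    + replace (Z.of_nat r + Z.of_nat l + t * kZ l m)%Z with (r' + lZ l)%Z in H by (unfold r', lZ; ring).
      rewrite seg_iff in H; cbn [fst snd] in H |- *. 2: apply Slt; unfold lZ; lia. 2: apply HA.
      exists r'. left. destruct H as [H1 H2]. split; auto. rewrite H2. unfold eval, lineA. cbn [fst snd]. unfold r'. ring.
    + replace (Z.of_nat r + Z.of_nat m + t * kZ l m)%Z with (r' + mZ m)%Z in H by (unfold r', mZ; ring).
      rewrite seg_iff in H; cbn [fst snd] in H |- *. 2: apply Slt; unfold mZ; lia. 2: apply HB.
      exists r'. right. destruct H as [H1 H2]. split; auto. rewrite H2. unfold eval, lineB. cbn [fst snd]. unfold r'. ring.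
  - intros [H|[r' H]]; auto. right.
    pose proof (idx0_dec _ (k_pos l m hl hm) r') as E. pose proof (idx0_lt _ (k_pos l m hl hm) r') as L.
    fold (kZ l m) in E.
    exists (r' / kZ l m)%Z, (idx0 (Nat.lcm l m) r'). split; auto.
    rewrite !Nat2Z.inj_add. rewrite <- E.
    destruct H as [[H1 H2]|[H1 H2]]; [left|right].
    + replace (Z.of_nat (idx0 (Nat.lcm l m) r') + Z.of_nat l + r' / kZ l m * kZ l m)%Z with (r' + lZ l)%Z
        by (unfold lZ; lia).
      rewrite seg_iff. 2: apply Slt; unfold lZ; lia. 2: apply HA.
      simpl. split; auto. rewrite H2. unfold eval, lineA. simpl. ring.
    + replace (Z.of_nat (idx0 (Nat.lcm l m) r') + Z.of_nat m + r' / kZ l m * kZ l m)%Z with (r' + mZ m)%Z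
        by (unfold mZ; lia).
      rewrite seg_iff. 2: apply Slt; unfold mZ; lia. 2: apply HB.
      simpl. split; auto. rewrite H2. unfold eval, lineB. simpl. ring.
Qed.

Lemma W_slopes h : Permutation (map fst (W h)) (nu_list l m alpha beta).
Proof.
  unfold W, nu_list. rewrite map_app, !map_map. apply Permutation_app.
  - transitivity (map alpha (map (fun j => idx1 l (h - Z.of_nat j + 1)) (seq 0 l))).
    + rewrite map_map. apply Permutation_refl.
    + apply Permutation_map. apply idx1_perm; auto.
  - transitivity (map (fun j => - beta j) (map (fun j => idx1 m (h - Z.of_nat j + 1)) (seq 0 m))).
    + rewrite map_map. apply Permutation_refl.
    + apply Permutation_map. apply idx1_perm; auto.
Qed.

Definition piece (a b : R) : Prop :=
  exists Ls' : list (R * R), (length Ls' = (l + m)%nat) /\ (Permutation (map fst Ls') (nu_list l m alpha beta)) /\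
    (forall z, a <= z <= b -> forall i, (1 <= i <= l + m)%nat -> P i z = eval (nth (pred i) Ls' (0, 0)) z).

Inductive Good : R -> R -> Prop :=
| g1 a b : a < b -> piece a b -> Good a b
| g2 a c b : a < c -> piece a c -> Good c b -> Good a b.

Lemma Good_lt a b : Good a b -> a < b.
Proof. induction 1; lra. Qed.

Lemma Good_trans a c b : Good a c -> Good c b -> Good a b.
Proof.
  induction 1; intro H2.
  - eapply g2; eauto.
  - eapply g2; eauto.
Qed.

Definition inI (p q w : R) : bool :=
  if Rlt_dec p w then (if Rlt_dec w q then true else false) else false.

Lemma inI_true p q w : inI p q w = true <-> p < w < q.
Proof.
  unfold inI. destruct (Rlt_dec p w); destruct (Rlt_dec w q); split; intro H; try discriminate; try lra; auto.
Qed.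

Lemma Good_elem h : forall N p q, Sg h <= p -> p < q -> q <= Sg (h + 1)%Z ->
  (length (filter (inI p q) (crossings (W h))) <= N)%nat -> Good p q.
Proof.
  induction N as [|N IH]; intros p q H1 H2 H3 H4;
  destruct (filter (inI p q) (crossings (W h))) as [|w rest] eqn:F.
  2: { simpl in H4. lia. }
  1,2: apply g1; auto;
    assert (Hc : forall w, In w (crossings (W h)) -> ~ (p < w < q))
      by (intros w Hw Hin; apply inI_true in Hin;
          assert (In w (filter (inI p q) (crossings (W h)))) by (apply filter_In; auto);
          rewrite F in H; destruct H);
    destruct (K2 (W h) p q H2 Hc) as [Ls' [Hp HL]];
    exists Ls'; split; [rewrite (Permutation_length Hp); apply W_len|split];
    [eapply perm_trans; [apply Permutation_map; exact Hp | apply W_slopes]|];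
    intros z Hz i Hi;
    rewrite (K1 h z i) by lra; rewrite HL by lra;
    rewrite (nth_indep _ _ (eval (0,0) z)) by (rewrite length_map, (Permutation_length Hp), W_len; lia);
    apply (map_nth (fun L => eval L z)).
  assert (Hw : In w (filter (inI p q) (crossings (W h)))) by (rewrite F; left; auto).
  apply filter_In in Hw. destruct Hw as [Hw1 Hw2]. apply inI_true in Hw2.
  apply Good_trans with w.
  - apply IH; try lra.
    assert (length (filter (inI p w) (crossings (W h))) < length (filter (inI p q) (crossings (W h))))%nat.
    { apply filter_lt with w; auto.
      intros x _ Hx. apply inI_true in Hx. apply inI_true. lra.
      apply inI_true; lra.
      destruct (inI p w w) eqn:E; auto. apply inI_true in E. lra. }
    rewrite F in H. simpl in H, H4. lia.
  - apply IH; try lra.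
    assert (length (filter (inI w q) (crossings (W h))) < length (filter (inI p q) (crossings (W h))))%nat.
    { apply filter_lt with w; auto.
      intros x _ Hx. apply inI_true in Hx. apply inI_true. lra.
      apply inI_true; lra.
      destruct (inI w q w) eqn:E; auto. apply inI_true in E. lra. }
    rewrite F in H. simpl in H, H4. lia.
Qed.

Lemma Good_steps : forall N h a b, Sg h <= a < Sg (h + 1)%Z -> a < b -> b <= Sg (h + Z.of_nat N)%Z -> Good a b.
Proof.
  induction N as [|N IH]; intros h a b H1 H2 H3.
  - rewrite Z.add_0_r in H3. lra.
  - destruct (Rle_dec b (Sg (h + 1)%Z)) as [Hb|Hb].
    + apply (Good_elem h (length (filter (inI a b) (crossings (W h)))) a b); try lra. apply le_n.
    + apply Good_trans with (Sg (h + 1)%Z).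
      * apply (Good_elem h (length (filter (inI a (Sg (h + 1)%Z)) (crossings (W h)))) a (Sg (h + 1)%Z)); try lra. apply le_n.
      * apply (IH (h + 1)%Z). split. lra. apply Slt; lia. lra.
        replace (h + 1 + Z.of_nat N)%Z with (h + Z.of_nat (S N))%Z by lia. auto.
Qed.

Lemma Good_all a b : 0 < a -> a < b -> Good a b.
Proof.
  intros Ha Hab.
  destruct (exists_h' a Ha) as [ha Hha]. destruct (exists_h' b ltac:(lra)) as [hb Hhb].
  assert (ha < hb + 1)%Z by (apply Sltinv; lra).
  apply (Good_steps (Z.to_nat (hb + 1 - ha)) ha); auto.
  rewrite Z2Nat.id by lia. replace (ha + (hb + 1 - ha))%Z with (hb + 1)%Z by ring. lra.
Qed.

Lemma Good_first a b : Good a b -> exists c, a < c <= b /\ piece a c.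
Proof.
  induction 1. exists b. split; auto; lra.
  exists c. pose proof (Good_lt _ _ H1). split; auto. lra.
Qed.

Lemma Good_last a b : Good a b -> exists c, a <= c < b /\ piece c b.
Proof.
  induction 1. exists a. split; auto; lra.
  destruct IHGood as [d [Hd1 Hd2]]. exists d. split; auto. lra.
Qed.

Lemma Good_list a b : Good a b -> exists xs : list R,
  let pts := a :: xs ++ b :: nil in
  forall j, (S j < length pts)%nat -> nth j pts 0 < nth (S j) pts 0 /\ piece (nth j pts 0) (nth (S j) pts 0).
Proof.
  induction 1.
  - exists nil. simpl. intros j Hj. destruct j. simpl; auto. lia.
  - destruct IHGood as [xs Hxs]. exists (c :: xs). intros pts j Hj.
    destruct j. simpl. auto.
    apply (Hxs j). simpl in Hj |- *. lia.
Qed.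

Lemma sum_ge (f : nat -> R) : forall (L : list nat) j, (forall j, 0 <= f j) -> In j L ->
  f j <= fold_right Rplus 0 (map f L).
Proof.
  induction L as [|a L IH]; intros j Hf Hj; simpl in *. destruct Hj.
  assert (0 <= fold_right Rplus 0 (map f L)).
  { clear IH Hj. induction L; simpl. lra. pose proof (Hf a0). lra. }
  destruct Hj as [<-|Hj]. lra. pose proof (IH j Hf Hj). pose proof (Hf a). lra.
Qed.

Definition Mb : R := fold_right Rplus 0 (map (fun j => Rabs (u j) + Rabs (v j)) (seq 0 (Nat.lcm l m))).

Lemma Xbound w (Hw : forall j, (j < Nat.lcm l m)%nat -> Rabs (w j) <= Mb) r :
  Rabs (Xw l m rho w r) <= Mb * Sg r.
Proof.
  unfold Xw. rewrite Rabs_mult. rewrite (Rabs_right (Sg r)) by (left; apply Sp).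
  pose proof (Sp r). pose proof (Hw (idx0 (Nat.lcm l m) r) (idx0_lt _ (k_pos l m hl hm) r)). nra.
Qed.

Lemma ubound j : (j < Nat.lcm l m)%nat -> Rabs (u j) <= Mb.
Proof.
  intro H. pose proof (Rabs_pos (v j)).
  pose proof (sum_ge (fun j => Rabs (u j) + Rabs (v j)) (seq 0 (Nat.lcm l m)) j
    (fun j => Rplus_le_le_0_compat _ _ (Rabs_pos (u j)) (Rabs_pos (v j))) ltac:(apply in_seq; lia)).
  unfold Mb. simpl in H1. lra.
Qed.
Lemma vbound j : (j < Nat.lcm l m)%nat -> Rabs (v j) <= Mb.
Proof.
  intro H. pose proof (Rabs_pos (u j)).
  pose proof (sum_ge (fun j => Rabs (u j) + Rabs (v j)) (seq 0 (Nat.lcm l m)) j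
    (fun j => Rplus_le_le_0_compat _ _ (Rabs_pos (u j)) (Rabs_pos (v j))) ltac:(apply in_seq; lia)).
  unfold Mb. simpl in H1. lra.
Qed.

Lemma interp_bound S1 S2 x y A B M : 0 < S1 < S2 -> S1 <= x <= S2 ->
  y * (S2 - S1) = A * (S2 - x) + B * (x - S1) -> Rabs A <= M * S1 -> Rabs B <= M * S2 ->
  Rabs y <= M * x.
Proof.
  intros H1 H2 E HA' HB'.
  assert (Rabs y * (S2 - S1) <= M * x * (S2 - S1)).
  { rewrite <- (Rabs_right (S2 - S1)) by lra. rewrite <- Rabs_mult, E.
    eapply Rle_trans. apply Rabs_triang. rewrite !Rabs_mult.
    rewrite (Rabs_right (S2 - x)), (Rabs_right (x - S1)) by lra. rewrite (Rabs_right (S2 - S1)) by lra.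
    assert (Rabs A * (S2 - x) <= M * S1 * (S2 - x)) by (apply Rmult_le_compat_r; lra).
    assert (Rabs B * (x - S1) <= M * S2 * (x - S1)) by (apply Rmult_le_compat_r; lra).
    nra. }
  apply Rmult_le_reg_r with (S2 - S1). lra. auto.
Qed.

Lemma Gsegs_bound x y : Gsegs x y -> Rabs y <= Mb * x.
Proof.
  intros [r [[Hr Hy]|[Hr Hy]]].
  - apply (interp_bound (Sg r) (Sg (r + lZ l)%Z) x y (X r) (Y (r + lZ l)%Z)); auto.
    split. apply Sp. apply Slt. unfold lZ; lia.
    rewrite Hy. unfold eval, lineA. cbn [fst snd].
    replace (Y (r + lZ l)%Z) with ((Y (r + lZ l)%Z - X r) + X r) by ring. rewrite (HA r). ring.
    apply Xbound, ubound. apply Xbound, vbound.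
  - apply (interp_bound (Sg r) (Sg (r + mZ m)%Z) x y (Y r) (X (r + mZ m)%Z)); auto.
    split. apply Sp. apply Slt. unfold mZ; lia.
    rewrite Hy. unfold eval, lineB. cbn [fst snd].
    replace (X (r + mZ m)%Z) with ((X (r + mZ m)%Z - Y r) + Y r) by ring. rewrite (HB r). ring.
    apply Xbound, vbound. apply Xbound, ubound.
Qed.

Lemma Mb_nonneg : 0 <= Mb.
Proof. pose proof (ubound 0 (k_pos l m hl hm)). pose proof (Rabs_pos (u 0%nat)). lra. Qed.

Lemma vals_len x : length (rsort (map (fun L => eval L x) (W (hof x)))) = (l + m)%nat.
Proof. rewrite (Permutation_length (rsort_perm _)), length_map, W_len. reflexivity. Qed.

Lemma P_pos x i : 0 < x -> P i x = nth (pred i) (rsort (map (fun L => eval L x) (W (hof x)))) 0.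
Proof. intro H. unfold P. destruct (Rle_dec x 0). lra. reflexivity. Qed.

Lemma P_zero i : P i 0 = 0.
Proof. unfold P. destruct (Rle_dec 0 0). reflexivity. lra. Qed.

Lemma P_in x i : 0 < x -> (1 <= i <= l + m)%nat -> Gsegs x (P i x).
Proof.
  intros Hx Hi. rewrite P_pos by auto. apply (vals_Gsegs x _ (hof x)). apply hof_spec; auto.
  eapply Permutation_in. apply rsort_perm. apply nth_In. rewrite vals_len. lia.
Qed.

Lemma slope_match (f : R -> R) s x y p q L : affine_on f s x y -> x <= p -> p < q -> q <= y ->
  (forall z, p <= z <= q -> f z = eval L z) -> s = fst L.
Proof.
  intros Ha H1 H2 H3 Hf. specialize (Ha p q ltac:(lra) ltac:(lra)).
  rewrite !Hf in Ha by lra. unfold eval in Ha.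
  apply Rmult_eq_reg_r with (q - p). lra. lra.
Qed.

Lemma nu_len : length (nu_list l m alpha beta) = (l + m)%nat.
Proof. unfold nu_list. rewrite length_app, !length_map, !length_seq. reflexivity. Qed.

Lemma nu_sys : nu_system (nu_list l m alpha beta) P.
Proof.
  unfold nu_system. cbv zeta. rewrite nu_len. split; [|split; [|split; [|split; [|split]]]].
  - intros i Hi x Hx eps Heps. destruct (Req_dec x 0) as [e|ne].
    + subst x. pose proof Mb_nonneg. exists (eps / (Mb + 1)). split.
      apply Rdiv_lt_0_compat; lra.
      intros y Hy Hd. rewrite P_zero, Rminus_0_r. rewrite Rminus_0_r, Rabs_right in Hd by lra.
      destruct (Req_dec y 0) as [e|ne]. subst y. rewrite P_zero, Rabs_R0. lra.
      pose proof (Gsegs_bound _ _ (P_in y i ltac:(lra) Hi)).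
      assert (Mb * y <= Mb * (eps / (Mb + 1))) by (apply Rmult_le_compat_l; lra).
      assert (Mb * (eps / (Mb + 1)) < eps).
      { apply Rmult_lt_reg_r with (Mb + 1). lra. field_simplify; lra. }
      lra.
    + assert (Hx' : 0 < x) by lra.
      destruct (Good_last _ _ (Good_all (x / 2) x ltac:(lra) ltac:(lra))) as [c1 [Hc1 [L1 [_ [_ HL1]]]]].
      destruct (Good_first _ _ (Good_all x (x + 1) ltac:(lra) ltac:(lra))) as [c2 [Hc2 [L2 [_ [_ HL2]]]]].
      set (s1 := fst (nth (pred i) L1 (0, 0))). set (s2 := fst (nth (pred i) L2 (0, 0))).
      set (K := Rabs s1 + Rabs s2 + 1).
      assert (HK : 0 < K) by (unfold K; pose proof (Rabs_pos s1); pose proof (Rabs_pos s2); lra).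
      exists (Rmin (x - c1) (Rmin (c2 - x) (eps / K))). split.
      { apply Rmin_pos. lra. apply Rmin_pos. lra. apply Rdiv_lt_0_compat; lra. }
      intros y Hy Hd.
      pose proof (Rmin_l (x - c1) (Rmin (c2 - x) (eps / K))).
      pose proof (Rmin_r (x - c1) (Rmin (c2 - x) (eps / K))).
      pose proof (Rmin_l (c2 - x) (eps / K)). pose proof (Rmin_r (c2 - x) (eps / K)).
      assert (Hyx : Rabs (y - x) < eps / K) by lra.
      assert (HeK : Rabs (y - x) * K < eps).
      { apply Rmult_lt_reg_r with (/ K). apply Rinv_0_lt_compat; lra.
        rewrite Rmult_assoc, Rinv_r by lra. unfold Rdiv in Hyx. lra. }
      destruct (Rle_dec y x) as [Hyl|Hyr].
      * assert (c1 <= y). { rewrite Rabs_left1 in Hd by lra. lra. }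
        rewrite (HL1 y), (HL1 x) by (first [lra|lia]). unfold eval. fold s1.
        replace (snd (nth (pred i) L1 (0, 0)) + s1 * y - (snd (nth (pred i) L1 (0, 0)) + s1 * x))
          with (s1 * (y - x)) by ring.
        rewrite Rabs_mult. pose proof (Rabs_pos (y - x)). pose proof (Rabs_pos s2).
        assert (Rabs s1 * Rabs (y - x) <= K * Rabs (y - x)) by (apply Rmult_le_compat_r; unfold K; lra).
        lra.
      * assert (y <= c2). { rewrite Rabs_right in Hd by lra. lra. }
        rewrite (HL2 y), (HL2 x) by (first [lra|lia]). unfold eval. fold s2.
        replace (snd (nth (pred i) L2 (0, 0)) + s2 * y - (snd (nth (pred i) L2 (0, 0)) + s2 * x))
          with (s2 * (y - x)) by ring.
        rewrite Rabs_mult. pose proof (Rabs_pos (y - x)). pose proof (Rabs_pos s1).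
        assert (Rabs s2 * Rabs (y - x) <= K * Rabs (y - x)) by (apply Rmult_le_compat_r; unfold K; lra).
        lra.
  - intros i Hi x Hx. unfold P. destruct (Rle_dec x 0). lra.
    replace (pred (S i)) with (S (pred i)) by lia.
    apply sortedR_nth. apply rsort_sorted. rewrite vals_len. lia.
  - intros i _. apply P_zero.
  - intros a b Ha Hab. destruct (Good_list _ _ (Good_all a b Ha Hab)) as [xs Hxs].
    exists xs. cbv zeta in Hxs |- *. intros j Hj. destruct (Hxs j Hj) as [H1 [Ls' [_ [_ H2]]]]. split; auto.
    intros i Hi. exists (fst (nth (pred i) Ls' (0, 0))). intros a' b' Ha' Hb'.
    rewrite (H2 a'), (H2 b') by auto. unfold eval. ring.
  - intros i Hi x y s Hx Hxy Haff.
    destruct (Good_first _ _ (Good_all ((x + y) / 2) y ltac:(lra) ltac:(lra))) as [c [Hc [Ls' [Hlen [Hperm HL]]]]].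
    assert (s = fst (nth (pred i) Ls' (0, 0))).
    { apply (slope_match (P i) s x y ((x + y) / 2) c); try lra; auto. }
    subst s. eapply Permutation_in. exact Hperm. apply in_map. apply nth_In. lia.
  - intros x y s Hx Hxy Hs.
    destruct (Good_first _ _ (Good_all ((x + y) / 2) y ltac:(lra) ltac:(lra))) as [c [Hc [Ls' [Hlen [Hperm HL]]]]].
    assert (Hsi : forall i, (1 <= i <= l + m)%nat -> s i = fst (nth (pred i) Ls' (0, 0))).
    { intros i Hi. apply (slope_match (P i) (s i) x y ((x + y) / 2) c); try lra; auto. }
    rewrite <- Hlen. erewrite map_ext_in. rewrite map_nth_seq1. exact Hperm.
    intros i Hi. apply in_seq in Hi. apply Hsi. lia.
Qed.

Lemma graph_eq z : Gset l m rho u v z <-> graph_union (length (nu_list l m alpha beta)) P z.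
Proof.
  destruct z as [x y]. rewrite Gset_iff. unfold graph_union. rewrite nu_len. cbn [fst snd].
  split.
  - intros [E|HG].
    + injection E as -> ->. split. lra. exists 1%nat. split. lia. rewrite P_zero. reflexivity.
    + pose proof (Gsegs_pos _ _ HG) as Hx. split. lra.
      apply (vals_Gsegs x y (hof x) (hof_spec x Hx)) in HG.
      apply (Permutation_in _ (Permutation_sym (rsort_perm _))) in HG.
      destruct (In_nth _ _ 0 HG) as [n [Hn E]]. rewrite vals_len in Hn.
      exists (S n). split. lia. rewrite P_pos by auto. simpl. auto.
  - intros [Hx [i [Hi E]]]. destruct (Req_dec x 0) as [e|ne].
    + left. subst x. rewrite P_zero in E. subst. reflexivity.
    + right. rewrite E. apply P_in; auto. lra.
Qed.

Lemma Gsegs_scale t x y : Gsegs x y ->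
  Gsegs (powerRZ (tt l m rho) t * x) (powerRZ (tt l m rho) t * y).
Proof.
  assert (Hp : 0 < powerRZ (tt l m rho) t) by (apply powerRZ_lt; pose proof (tt_gt1 l m rho hl hm hrho); lra).
  intros [r [[Hr Hy]|[Hr Hy]]]; exists (r + t * kZ l m)%Z.
  - left. replace (r + t * kZ l m + lZ l)%Z with ((r + lZ l) + t * kZ l m)%Z by ring.
    rewrite !Sshift. split. split; apply Rmult_le_compat_l; lra.
    rewrite Hy. unfold eval, lineA. cbn [fst snd].
    rewrite (aa_per l m alpha hl), (Xw_shift l m rho hl hm hrho), Sshift. ring.
  - right. replace (r + t * kZ l m + mZ m)%Z with ((r + mZ m) + t * kZ l m)%Z by ring.
    rewrite !Sshift. split. split; apply Rmult_le_compat_l; lra.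
    rewrite Hy. unfold eval, lineB. cbn [fst snd].
    rewrite (bb_per l m beta hm), (Xw_shift l m rho hl hm hrho), Sshift. ring.
Qed.

Lemma Gset_scale z : Gset l m rho u v z <-> Gset l m rho u v (tt l m rho * fst z, tt l m rho * snd z).
Proof.
  destruct z as [x y]. cbn [fst snd]. rewrite !Gset_iff.
  pose proof (tt_gt1 l m rho hl hm hrho) as Ht.
  assert (P1 : powerRZ (tt l m rho) 1 = tt l m rho) by (simpl; ring).
  assert (Pm1 : powerRZ (tt l m rho) (-1) * tt l m rho = 1).
  { simpl. field. lra. }
  split.
  - intros [E|HG].
    + left. injection E as -> ->. f_equal; ring.
    + right. rewrite <- P1. apply Gsegs_scale. auto.
  - intros [E|HG].
    + left. injection E as E1 E2. f_equal; nra.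
    + right. apply (Gsegs_scale (-1)) in HG. rewrite <- !Rmult_assoc, Pm1, !Rmult_1_l in HG. auto.
Qed.

End Graph.

Theorem theorem2p1
  (l m : nat) (alpha beta rho : nat -> R)
  (hl : (0 < l)%nat) (hm : (0 < m)%nat)
  (halpha : forall i, (1 <= i <= l)%nat -> 0 <= alpha i)
  (hbeta : forall j, (1 <= j <= m)%nat -> 0 <= beta j)
  (hnz : (exists i, (1 <= i <= l)%nat /\ alpha i <> 0) \/
         (exists j, (1 <= j <= m)%nat /\ beta j <> 0))
  (hsum : sum_range alpha l = sum_range beta m)
  (hrho : forall i, (1 <= i <= Nat.lcm l m)%nat -> 1 < rho i) :
  exists u v : nat -> R,
    (slope_conditions l m alpha beta rho u v /\
     regular_nu_graph (nu_list l m alpha beta) (Gset l m rho u v)) /\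
    (forall u' v' : nat -> R, slope_conditions l m alpha beta rho u' v' ->
       forall h, (h < Nat.lcm l m)%nat -> u' h = u h /\ v' h = v h).
Proof.
  exists (u0 l m alpha beta rho), (v0 l m alpha beta rho).
  pose proof (slope_u0v0 l m alpha beta rho hl hm hrho) as Hs.
  pose proof Hs as Hs'. apply (slope_equiv l m alpha beta rho hl hm hrho) in Hs'.
  destruct Hs' as [HA HB].
  split; [split|].
  - exact Hs.
  - split.
    + exists (P l m alpha beta rho (u0 l m alpha beta rho) (v0 l m alpha beta rho)). split.
      * exact (nu_sys l m alpha beta rho _ _ hl hm hrho HA HB).
      * intro z. exact (graph_eq l m alpha beta rho _ _ hl hm hrho HA HB z).
    + exists (tt l m rho). split. exact (tt_gt1 l m rho hl hm hrho).
      intro z. exact (Gset_scale l m alpha beta rho _ _ hl hm hrho HA HB z).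
  - intros u' v' H h Hh. apply (unique_uv l m alpha beta rho hl hm hrho u' v' H h Hh).
Qed.
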